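(* Let $G$ be a group generated by a finite symmetric set $S$ and let $|\cdot|\colon S\to\{0,1\}$ be a pseudolength on $S$, extended to the word pseudonorm $|g|=\min\{\sum_{i=1}^k|s_i| : g=s_1\cdots s_k,\ s_i\in S\}$ on $G$. If the subgroup $G_0=\langle\{s\in S : |s|=0\}\rangle$ is finite, then for every $n\in\mathbb{N}$ the set $B_{G,S,|\cdot|}(n)=\{g\in G : |g|\le n\}$ is finite, so the function $\gamma_{G,S,|\cdot|}(n)=|B_{G,S,|\cdot|}(n)|$ is well defined, and $\gamma_{G,S,|\cdot|}\sim\gamma_{G,S}$, where $\gamma_{G,S}$ is the usual growth function obtained by giving length $1$ to each generator.
   Context: For non-decreasing $f,g\colon\mathbb{N}\to\mathbb{N}$, write $f\lesssim g$ if there exists $C\in\mathbb{N}_{>0}$ with $f(n)\le g(Cn)$ for all $n\ge1$, and $f\sim g$ if $f\lesssim g$ and $g\lesssim f$. $\gamma_{G,S}(n)$ is the number of elements of $G$ of word length at most $n$ with respect to $S$. *)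

(* Defs.v *)
From Stdlib Require Import List Arith.
Import ListNotations.

Record Group := {
  carrier :> Type;
  gmul : carrier -> carrier -> carrier;
  ginv : carrier -> carrier;
  gone : carrier;
  gmul_assoc : forall x y z, gmul x (gmul y z) = gmul (gmul x y) z;
  gmul_1l : forall x, gmul gone x = x;
  gmul_Vl : forall x, gmul (ginv x) x = gone
}.

Section Words.
Variable G : Group.

Definition wprod (w : list G) : G := fold_right (gmul G) (gone G) w.

Definition word_over (P : G -> Prop) (w : list G) : Prop :=
  forall x, In x w -> P x.

Definition inS (S : list G) (x : G) : Prop := In x S.

Definition symmetric_set (S : list G) : Prop :=
  forall s, In s S -> In (ginv G s) S.
Definition generates (S : list G) : Prop :=
  forall g, exists w, word_over (inS S) w /\ wprod w = g.

(* a pseudolength S -> {0,1} (values outside S are irrelevant) *)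
Definition pseudolength01 (S : list G) (len : G -> nat) : Prop :=
  forall s, In s S -> len s <= 1.

Definition wweight (len : G -> nat) (w : list G) : nat :=
  list_sum (map len w).

Definition pnorm_le (S : list G) (len : G -> nat) (g : G) (n : nat) : Prop :=
  exists w, word_over (inS S) w /\ wprod w = g /\ wweight len w <= n.

Definition ball (S : list G) (len : G -> nat) (n : nat) : G -> Prop :=
  fun g => pnorm_le S len g n.

Definition zero_gen (S : list G) (len : G -> nat) (x : G) : Prop :=
  In x S /\ len x = 0.
Definition in_G0 (S : list G) (len : G -> nat) (g : G) : Prop :=
  exists w, word_over (fun x => zero_gen S len x \/ zero_gen S len (ginv G x)) w
            /\ wprod w = g.

Definition finite_set (P : G -> Prop) : Prop :=
  exists l : list G, forall g, P g -> In g l.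

Definition has_card (P : G -> Prop) (k : nat) : Prop :=
  exists l : list G, NoDup l /\ (forall g, In g l <-> P g) /\ length l = k.

End Words.

Definition one_len {G : Group} : G -> nat := fun _ => 1.

(* f <~ g  : exists C > 0, forall n >= 1, f n <= g (C n),
   for growth functions given as cardinalities of balls *)
Definition growth_le (G : Group) (S1 : list G) (l1 : G -> nat)
  (S2 : list G) (l2 : G -> nat) : Prop :=
  exists C : nat, 0 < C /\ forall n k1 k2, 1 <= n ->
    has_card G (ball G S1 l1 n) k1 -> has_card G (ball G S2 l2 (C * n)) k2 ->
    k1 <= k2.

(* Main.v *)
Require Import Defs.
From Stdlib Require Import List Arith Lia.
Import ListNotations.

Section Aux.
Variable G : Group.

Lemma wprod_app (u v : list G) : wprod G (u ++ v) = gmul G (wprod G u) (wprod G v).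
Proof.
  induction u as [|a u IH]; simpl.
  - now rewrite gmul_1l.
  - unfold wprod in *; simpl. rewrite IH. apply gmul_assoc.
Qed.

Lemma wweight_one (w : list G) : wweight G one_len w = length w.
Proof. induction w; simpl; auto. unfold wweight in *; simpl. now rewrite IHw. Qed.

Lemma wweight_le (S : list G) len (Hlen : pseudolength01 G S len) w :
  word_over G (inS G S) w -> wweight G len w <= length w.
Proof.
  induction w as [|a w IH]; simpl; intros H; unfold wweight in *; simpl; auto.
  assert (len a <= 1) by (apply Hlen; apply H; simpl; auto).
  assert (list_sum (map len w) <= length w) by (apply IH; intros x Hx; apply H; simpl; auto).
  lia.
Qed.

Lemma bound_list (S : list G) (HSgen : generates G S) (l : list G) :
  exists M, forall g, In g l -> exists u, word_over G (inS G S) u /\ wprod G u = g /\ length u <= M.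
Proof.
  induction l as [|a l [M HM]].
  - exists 0. intros g [].
  - destruct (HSgen a) as [u [Hu1 Hu2]].
    exists (max M (length u)). intros g [<-|Hg].
    + exists u. repeat split; auto. lia.
    + destruct (HM g Hg) as [v [? [? ?]]]. exists v. repeat split; auto. lia.
Qed.

Fixpoint Lprod (S0 : list G) (m : nat) : list G :=
  match m with
  | 0 => [gone G]
  | Datatypes.S m => gone G :: flat_map (fun s => map (gmul G s) (Lprod S0 m)) S0
  end.

Lemma Lprod_spec (S : list G) m w :
  word_over G (inS G S) w -> length w <= m -> In (wprod G w) (Lprod S m).
Proof.
  revert w; induction m as [|m IH]; intros w Hw Hl.
  - destruct w; simpl in *; [left; auto | lia].
  - destruct w as [|a w]; simpl; [left; auto|].
    right. apply in_flat_map. exists a. split.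
    + apply Hw; simpl; auto.
    + apply in_map. apply IH. intros x Hx; apply Hw; simpl; auto. simpl in Hl; lia.
Qed.

Lemma key (S : list G) len (Hlen : pseudolength01 G S len) M
  (HM : forall g, in_G0 G S len g -> exists u, word_over G (inS G S) u /\ wprod G u = g /\ length u <= M)
  w : word_over G (inS G S) w ->
  exists g0 w', in_G0 G S len g0 /\ word_over G (inS G S) w' /\
     wprod G w = gmul G g0 (wprod G w') /\ length w' <= (M+1) * wweight G len w.
Proof.
  induction w as [|a w IH]; intros Hw.
  - exists (gone G), []. repeat split.
    + exists []. split; [intros x []|reflexivity].
    + intros x [].
    + simpl. now rewrite gmul_1l.
    + simpl; lia.
  - assert (Ha : In a S) by (apply Hw; simpl; auto).
    destruct IH as [g0 [w' [Hg0 [Hw' [Heq Hlw]]]]].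
    { intros x Hx; apply Hw; simpl; auto. }
    assert (len a <= 1) by (apply Hlen; auto).
    destruct (len a) as [|[|k]] eqn:E; [ | | lia].
    + exists (gmul G a g0), w'. destruct Hg0 as [u [Hu Hpu]].
      repeat split; auto.
      * exists (a :: u). split.
        -- intros x [<-|Hx]; [left; split; auto | apply Hu; auto].
        -- simpl. unfold wprod in *; simpl. now rewrite Hpu.
      * change (wprod G (a :: w)) with (gmul G a (wprod G w)).
        rewrite Heq. apply gmul_assoc.
      * unfold wweight in *; simpl. rewrite E. simpl. lia.
    + destruct (HM g0 Hg0) as [u [Hu [Hpu Hlu]]].
      exists (gone G), (a :: u ++ w'). repeat split.
      * exists []. split; [intros x []|reflexivity].
      * intros x [<-|Hx]; auto. apply in_app_or in Hx as [Hx|Hx]; [apply Hu|apply Hw']; auto.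
      * rewrite gmul_1l. change (wprod G (a :: w)) with (gmul G a (wprod G w)).
        change (wprod G (a :: u ++ w')) with (gmul G a (wprod G (u ++ w'))).
        rewrite wprod_app, Hpu, Heq. reflexivity.
      * unfold wweight in *; simpl. rewrite E. rewrite length_app. simpl in *. nia.
Qed.

End Aux.

Theorem mainTheorem6 (G : Group) (S : list G) (len : G -> nat)
  (HSsym : symmetric_set G S) (HSgen : generates G S)
  (Hlen : pseudolength01 G S len)
  (HG0 : finite_set G (in_G0 G S len)) :
  (forall n, finite_set G (ball G S len n)) /\
  growth_le G S len S one_len /\ growth_le G S one_len S len.
Proof.
  destruct HG0 as [l Hl].
  destruct (bound_list G S HSgen l) as [M HM0].
  assert (HM : forall g, in_G0 G S len g -> exists u, word_over G (inS G S) u /\ wprod G u = g /\ length u <= M)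
    by (intros g Hg; apply HM0, Hl, Hg).
  assert (Hball : forall n g, ball G S len n g ->
            exists w, word_over G (inS G S) w /\ wprod G w = g /\ length w <= M + (M+1) * n).
  { intros n g [w [Hw [Hp Hwt]]].
    destruct (key G S len Hlen M HM w Hw) as [g0 [w' [Hg0 [Hw' [Heq Hlw]]]]].
    destruct (HM g0 Hg0) as [u [Hu [Hpu Hlu]]].
    exists (u ++ w'). repeat split.
    - intros x Hx. apply in_app_or in Hx as [Hx|Hx]; [apply Hu|apply Hw']; auto.
    - rewrite wprod_app, Hpu, <- Heq; auto.
    - rewrite length_app. nia. }
  split; [|split].
  - intros n. exists (Lprod G S (M + (M+1) * n)). intros g Hg.
    destruct (Hball n g Hg) as [w [Hw [<- Hlw]]]. apply Lprod_spec; auto.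
  - exists (2*M+1). split; [lia|]. intros n k1 k2 Hn [l1 [Hnd1 [Hl1 <-]]] [l2 [_ [Hl2 <-]]].
    apply NoDup_incl_length; auto. intros g Hg. apply Hl2. apply Hl1 in Hg.
    destruct (Hball n g Hg) as [w [Hw [Hp Hlw]]]. exists w. repeat split; auto.
    rewrite wweight_one. nia.
  - exists 1. split; [lia|]. intros n k1 k2 Hn [l1 [Hnd1 [Hl1 <-]]] [l2 [_ [Hl2 <-]]].
    apply NoDup_incl_length; auto. intros g Hg. apply Hl2. apply Hl1 in Hg.
    destruct Hg as [w [Hw [Hp Hwt]]]. exists w. repeat split; auto.
    rewrite wweight_one in Hwt. pose proof (wweight_le G S len Hlen w Hw). lia.
Qed.
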